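(* Let $1\le p<\infty$, $N\ge2$, and for $1\le i\le N$ let $T_i$ be the unilateral weighted backward shift on $\ell^p(\mathbb{N})$ with weight sequence $(w^{(i)}_m)_{m\in\mathbb{N}}$. If $T_1,\dots,T_N$ are s-hypercyclic, then the direct sum $T_1\oplus\cdots\oplus T_N$ is hypercyclic on $\oplus_{i=1}^N\ell^p(\mathbb{N})$.
   Context: $\{e_m\}$ is the canonical basis of $\ell^p(\mathbb{N})$ over $\mathbb{K}\in\{\mathbb{R},\mathbb{C}\}$. The unilateral weighted backward shift with bounded weight sequence $(w_m)$ is $Te_m=w_me_{m-1}$ for $m\ge2$, $Te_1=0$. Operators $T_1,\dots,T_N$ on $X$ are s-hypercyclic if some $x\in X$ has the closure of $\{(T_1^nx,\dots,T_N^nx):n\in\mathbb{N}\}$ containing the diagonal $\{(y,\dots,y):y\in X\}$ of $\oplus_{i=1}^NX$. An operator is hypercyclic if some vector has dense orbit. *)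

(* Defs.v *)
From HB Require Import structures.
From mathcomp Require Import all_boot all_order all_algebra.
From mathcomp Require Import all_classical all_reals all_analysis.
From mathcomp Require Import complex.
Set Implicit Arguments. Unset Strict Implicit. Unset Printing Implicit Defensive.
Import Order.TTheory GRing.Theory Num.Theory.
Local Open Scope ring_scope.

Definition absRR (R : realType) (x : R) : R := `|x|.
Definition absRC (R : realType) (x : R[i]) : R := ComplexField.Normc.normc x.

Section Lp.
Variables (R : realType) (K : numFieldType) (nrm : K -> R) (p : R).

(* sum_n |x_n|^p, as an extended real (well defined for any sequence) *)
Definition lp_sum (x : nat -> K) : \bar R :=
  (\sum_(0 <= k <oo) ((nrm (x k)) `^ p)%:E)%E.

(* membership in l^p(N) (sequences indexed from 0) *)
Definition in_lp (x : nat -> K) : Prop := (lp_sum x < +oo)%E.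

Definition lp_norm (x : nat -> K) : R := (fine (lp_sum x)) `^ p^-1.

(* unilateral weighted backward shift: T e_0 = 0, T e_m = w m * e_{m-1}
   (m >= 1); i.e. (T x)_j = w_{j+1} x_{j+1}. *)
Definition wshift (w : nat -> K) (x : nat -> K) : nat -> K :=
  fun j => w j.+1 * x j.+1.

Definition bounded_weights (w : nat -> K) : Prop :=
  exists M : R, forall m, nrm (w m) <= M.

(* T_1, ..., T_N s-hypercyclic on l^p: some x in l^p whose orbit
   {(T_1^n x, ..., T_N^n x)} has closure (in the product topology of
   the direct sum) containing the diagonal. *)
Definition s_hypercyclic (N : nat) (T : 'I_N -> (nat -> K) -> (nat -> K)) : Prop :=
  exists x, in_lp x /\
    forall y, in_lp y -> forall eps : R, 0 < eps ->
      exists n : nat, forall i : 'I_N,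
        lp_norm (fun k => iter n (T i) x k - y k) < eps.

Definition dsum_hypercyclic (N : nat) (T : 'I_N -> (nat -> K) -> (nat -> K)) : Prop :=
  exists x : 'I_N -> nat -> K, (forall i, in_lp (x i)) /\
    forall y : 'I_N -> nat -> K, (forall i, in_lp (y i)) ->
      forall eps : R, 0 < eps ->
      exists n : nat, forall i : 'I_N,
        lp_norm (fun k => iter n (T i) (x i) k - y i k) < eps.

Definition cor3p8_statement : Prop :=
  forall (N : nat), (2 <= N)%N ->
  forall w : 'I_N -> nat -> K, (forall i, bounded_weights (w i)) ->
  s_hypercyclic (fun i => wshift (w i)) ->
  dsum_hypercyclic (fun i => wshift (w i)).

End Lp.

(* Main.v *)
Require Import Defs.
From HB Require Import structures.
From mathcomp Require Import all_boot all_order all_algebra.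
From mathcomp Require Import all_classical all_reals all_analysis.
From mathcomp Require Import complex.
From mathcomp Require Import ring lra zify.
Import Order.TTheory GRing.Theory Num.Theory.
Local Open Scope ring_scope.

Section Basic.
Variables (R : realType) (K : numFieldType) (nrm : K -> R) (p : R).
Hypothesis p1 : 1 <= p.
Hypothesis nrm_ge0 : forall x, 0 <= nrm x.
Hypothesis nrmD : forall x y, nrm (x + y) <= nrm x + nrm y.
Hypothesis nrmM : forall x y, nrm (x * y) = nrm x * nrm y.
Hypothesis nrmN : forall x, nrm (- x) = nrm x.
Hypothesis nrm_nat : forall n : nat, nrm n%:R = n%:R.

Lemma p_gt0 : 0 < p.
Proof. exact: lt_le_trans ltr01 p1. Qed.

Definition pw (v : nat -> K) m := nrm (v m) `^ p.
Definition P v a b := \sum_(a <= m < b) pw v m.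
Definition Cst : R := 2 `^ p.

Lemma powR_le_mono {a b} : 0 <= a -> a <= b -> a `^ p <= b `^ p.
Proof.
move=> a0 ab; apply: (ge0_ler_powR (ltW p_gt0)) => //; rewrite nnegrE //.
exact: le_trans ab.
Qed.

Lemma powR_lt_inv a b : 0 <= a -> 0 <= b -> a `^ p < b `^ p -> a < b.
Proof.
move=> a0 b0 h; rewrite ltNge; apply/negP => ba.
by move: (powR_le_mono b0 ba); rewrite leNgt h.
Qed.

Lemma Cst_ge1 : 1 <= Cst.
Proof.
have h2 : (1 : R) <= 2 by lra.
have := @ler_powR R 2 h2 0 p (ltW p_gt0).
by rewrite powRr0.
Qed.

Lemma Cst_gt0 : 0 < Cst.
Proof. exact: lt_le_trans ltr01 Cst_ge1. Qed.

Lemma powD_le {a b} : 0 <= a -> 0 <= b ->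
  (a + b) `^ p <= Cst * (a `^ p + b `^ p).
Proof.
wlog ab : a b / a <= b.
  move=> H a0 b0; case: (leP a b) => h; first exact: H.
  by rewrite addrC [X in _ * X]addrC; apply: H => //; exact: ltW.
move=> a0 b0.
have h1 : a + b <= 2 * b by lra.
apply: le_trans (powR_le_mono (addr_ge0 a0 b0) h1) _.
have h2 : (0:R) <= 2 by lra.
rewrite powRM //.
rewrite -/Cst; apply: ler_wpM2l; first exact: ltW Cst_gt0.
by rewrite lerDr powR_ge0.
Qed.

Lemma pw_ge0 v m : 0 <= pw v m.
Proof. exact: powR_ge0. Qed.

Lemma P_ge0 v a b : 0 <= P v a b.
Proof. by apply: sumr_ge0 => m _; exact: pw_ge0. Qed.

Lemma pw_add u v m : pw (fun k => u k + v k) m <= Cst * (pw u m + pw v m).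
Proof.
rewrite /pw /=; apply: le_trans _ (powD_le (nrm_ge0 (u m)) (nrm_ge0 (v m))).
exact: powR_le_mono.
Qed.

Lemma pw_sub u v m : pw (fun k => u k - v k) m <= Cst * (pw u m + pw v m).
Proof.
have := pw_add u (fun k => - v k) m; by rewrite /pw nrmN.
Qed.

Lemma pw_mul d v m : pw (fun k => d k * v k) m = nrm (d m) `^ p * pw v m.
Proof. by rewrite /pw nrmM powRM. Qed.

Lemma P_le u v a b : (forall m, pw u m <= pw v m) -> P u a b <= P v a b.
Proof. by move=> h; apply: ler_sum => m _. Qed.

Lemma P_add u v a b : P (fun k => u k + v k) a b <= Cst * (P u a b + P v a b).
Proof.
rewrite /P -big_split mulr_sumr /=; apply: ler_sum => m _; exact: pw_add.
Qed.

Lemma P_sub u v a b : P (fun k => u k - v k) a b <= Cst * (P u a b + P v a b).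
Proof.
rewrite /P -big_split mulr_sumr /=; apply: ler_sum => m _; exact: pw_sub.
Qed.

Lemma P_cat v {a b c} : (a <= b)%N -> (b <= c)%N -> P v a c = P v a b + P v b c.
Proof. by move=> ab bc; rewrite /P (big_cat_nat ab bc). Qed.

Lemma P_up_mono v a {b b'} : (b <= b')%N -> P v a b <= P v a b'.
Proof.
move=> bb'; case: (leqP a b) => ab.
  by rewrite (P_cat v ab bb') lerDl P_ge0.
by rewrite /P big_geq ?P_ge0 //; exact: ltnW.
Qed.

Lemma P_tail_mono v {a a'} b : (a <= a')%N -> P v a' b <= P v a b.
Proof.
move=> aa'; case: (leqP a' b) => a'b.
  by rewrite (P_cat v aa' a'b) lerDr P_ge0.
by rewrite /P big_geq ?P_ge0 //; exact: ltnW.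
Qed.

Lemma P_split_le v a b c : P v a b <= P v a c + P v c b.
Proof.
case: (leqP a c) => ac.
  case: (leqP c b) => cb; first by rewrite (P_cat v ac cb).
  rewrite /P [X in _ + X]big_geq ?addr0; last exact: ltnW.
  exact: P_up_mono (ltnW cb).
rewrite /P [X in X + _]big_geq ?add0r; last exact: ltnW.
exact: P_tail_mono (ltnW ac).
Qed.

Lemma P_last v a b : (a <= b)%N -> P v a b.+1 = P v a b + pw v b.
Proof. by move=> ab; rewrite /P big_nat_recr. Qed.

Lemma pw_le_P v a b m : (a <= m)%N -> (m < b)%N -> pw v m <= P v a b.
Proof.
move=> am mb; apply: le_trans _ (P_up_mono v a mb).
rewrite P_last // lerDr; exact: P_ge0.
Qed.


Lemma iter_sub (w : nat -> K) n u v j :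
  iter n (wshift w) (fun m => u m - v m) j =
  iter n (wshift w) u j - iter n (wshift w) v j.
Proof. by elim: n j => [|n IH] j //=; rewrite /wshift IH mulrBr. Qed.

Lemma iter_diag (w : nat -> K) n d v j :
  iter n (wshift w) (fun m => d m * v m) j = d (j + n)%N * iter n (wshift w) v j.
Proof.
elim: n j => [|n IH] j /=; first by rewrite addn0.
by rewrite /wshift IH addSnnS mulrCA.
Qed.

Definition bounded v := exists B, forall b, P v 0 b <= B.

Lemma P_le_lpsum v b : ((P v 0 b)%:E <= lp_sum nrm p v)%E.
Proof.
rewrite /P -sumEFin; apply: nneseries_lim_ge => k _ _; rewrite lee_fin.
exact: pw_ge0.
Qed.

Lemma lpsum_le v B : (forall b, P v 0 b <= B) -> (lp_sum nrm p v <= B%:E)%E.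
Proof.
move=> h; apply: lime_le.
  by apply: is_cvg_nneseries => k _ _; rewrite lee_fin; exact: pw_ge0.
by apply: nearW => b; rewrite sumEFin lee_fin; exact: h.
Qed.

Lemma lpsum_ge0 v : (0 <= lp_sum nrm p v)%E.
Proof. by apply: le_trans (P_le_lpsum v 0); rewrite /P big_geq. Qed.

Lemma lpsum_fin v : in_lp nrm p v -> lp_sum nrm p v \is a fin_num.
Proof. by move=> h; rewrite ge0_fin_numE //; exact: lpsum_ge0. Qed.

Lemma in_lp_bounded v : in_lp nrm p v -> bounded v.
Proof.
move=> h; exists (fine (lp_sum nrm p v)) => b.
by rewrite -lee_fin fineK ?lpsum_fin //; exact: P_le_lpsum.
Qed.

Lemma bounded_in_lp v : bounded v -> in_lp nrm p v.
Proof.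
move=> [B hB]; rewrite /in_lp; exact: le_lt_trans (lpsum_le _ _ hB) (ltry B).
Qed.

Lemma fine_lpsum_ge0 v : 0 <= fine (lp_sum nrm p v).
Proof. apply: fine_ge0; exact: lpsum_ge0. Qed.

Lemma lpnorm_lt v eps : in_lp nrm p v -> 0 < eps ->
  lp_norm nrm p v < eps -> forall b, P v 0 b < eps `^ p.
Proof.
move=> hv e0 hn b; set S := fine (lp_sum nrm p v).
have S0 : 0 <= S by exact: fine_lpsum_ge0.
have hb : P v 0 b <= S.
  by rewrite -lee_fin fineK ?lpsum_fin //; exact: P_le_lpsum.
apply: le_lt_trans hb _.
have -> : S = (S `^ p^-1) `^ p.
  by rewrite -powRrM mulVf ?powRr1 // gt_eqF // p_gt0.
apply: gt0_ltr_powR; first exact: p_gt0.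
- by rewrite nnegrE powR_ge0.
- by rewrite nnegrE ltW.
- exact: hn.
Qed.

Lemma lpnorm_le v B eps : 0 < eps -> (forall b, P v 0 b <= B) ->
  B < eps `^ p -> lp_norm nrm p v < eps.
Proof.
move=> e0 hB Be; set S := fine (lp_sum nrm p v).
have S0 : 0 <= S by exact: fine_lpsum_ge0.
have hin : in_lp nrm p v by apply: bounded_in_lp; exists B.
have SB : S <= B by rewrite -lee_fin fineK ?lpsum_fin //; exact: lpsum_le.
have B0 : 0 <= B by exact: le_trans SB.
have pi0 : 0 < p^-1 by rewrite invr_gt0 p_gt0.
rewrite /lp_norm -/S.
apply: (@le_lt_trans _ _ (B `^ p^-1)).
  by apply: (ge0_ler_powR (ltW pi0)); rewrite ?nnegrE.
have -> : eps = (eps `^ p) `^ p^-1.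
  by rewrite -powRrM mulfV ?powRr1 ?(ltW e0) // gt_eqF // p_gt0.
by apply: (gt0_ltr_powR pi0); rewrite ?nnegrE ?powR_ge0.
Qed.


Lemma tail v : bounded v -> forall d, 0 < d -> exists a, forall b, P v a b <= d.
Proof.
move=> [B hB] d d0.
pose E : set R := fun r => exists b, r = P v 0 b.
have hs : has_sup E.
  split; first by exists (P v 0 0); exists 0%N.
  by exists B => r [b ->]; exact: hB.
have [r [b0 ->] hr] := sup_adherent d0 hs.
exists b0 => b.
case: (leqP b0 b) => hb.
  have hE : P v 0 b <= sup E by apply: ub_le_sup; [case: hs | exists b].
  move: hE; rewrite (P_cat v (leq0n b0) hb) => hE.
  lra.
by rewrite /P big_geq ?(ltW d0) //; exact: ltnW.
Qed.

Section Shift.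
Variables (w : nat -> K) (M : R).
Hypothesis M0 : 0 <= M.
Hypothesis wM : forall m, nrm (w m) <= M.

Definition bet := M `^ p.
Lemma bet_ge0 : 0 <= bet.
Proof. exact: powR_ge0. Qed.

Lemma P_shift v a b : P (wshift w v) a b <= bet * P v a.+1 b.+1.
Proof.
rewrite /P -[a.+1]addn1 big_addn subn1 /= mulr_sumr; apply: ler_sum => m _.
rewrite addn1 /pw /wshift nrmM powRM //.
apply: ler_wpM2r; first exact: powR_ge0.
exact: powR_le_mono (wM _).
Qed.

Lemma P_iter v n a b :
  P (iter n (wshift w) v) a b <= bet ^+ n * P v (a + n) (b + n).
Proof.
elim: n a b => [|n IH] a b; first by rewrite expr0 mul1r !addn0.
rewrite iterS; apply: le_trans (P_shift _ _ _) _.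
rewrite exprS -mulrA; apply: ler_wpM2l; first exact: bet_ge0.
by apply: le_trans (IH _ _) _; rewrite !addSnnS.
Qed.

Lemma bounded_iter v n : bounded v -> bounded (iter n (wshift w) v).
Proof.
move=> [B hB]; exists (bet ^+ n * B) => b.
apply: le_trans (P_iter _ _ _ _) _; apply: ler_wpM2l.
  exact: exprn_ge0 bet_ge0.
by apply: le_trans (hB (b + n)%N); apply: P_tail_mono.
Qed.

End Shift.

Lemma bounded_sub u v : bounded u -> bounded v -> bounded (fun k => u k - v k).
Proof.
move=> [Bu hu] [Bv hv]; exists (Cst * (Bu + Bv)) => b.
apply: le_trans (P_sub _ _ _ _) _; apply: ler_wpM2l; first exact: ltW Cst_gt0.
exact: lerD.
Qed.

Lemma bounded_add u v : bounded u -> bounded v -> bounded (fun k => u k + v k).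
Proof.
move=> [Bu hu] [Bv hv]; exists (Cst * (Bu + Bv)) => b.
apply: le_trans (P_add _ _ _ _) _; apply: ler_wpM2l; first exact: ltW Cst_gt0.
exact: lerD.
Qed.


Lemma small_inv (q : R) : 0 < q -> exists r : nat, (r.+1%:R)^-1 <= q.
Proof.
move=> q0; exists (Num.Def.archi_bound q^-1).
have qi0 : 0 <= q^-1 by rewrite invr_ge0 ltW.
rewrite -[X in _ <= X]invrK lef_pV2 ?posrE ?invr_gt0 ?ltr0Sn //.
apply: ltW; apply: lt_le_trans (archi_boundP qi0) _.
by rewrite ler_nat.
Qed.

Lemma sum_delta (f : nat -> R) J a b : (forall m, m != J -> f m = 0) ->
  (forall m, 0 <= f m) -> \sum_(a <= m < b) f m <= f J.
Proof.
move=> fz f0; elim: b => [|b IH]; first by rewrite big_geq.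
case: (leqP a b) => ab; last by rewrite big_geq.
rewrite big_nat_recr //=.
case: (eqVneq b J) => [bJ|bJ]; last by rewrite (fz _ bJ) addr0.
rewrite bJ big_nat_cond big1 ?add0r // => m /andP[/andP[_ hm] _].
by apply: fz; rewrite neq_ltn hm.
Qed.

Lemma nrm1 : nrm 1 = 1.
Proof. by have := nrm_nat 1; rewrite !mulr1n. Qed.

Lemma nrm0 : nrm 0 = 0.
Proof. by have := nrm_nat 0; rewrite !mulr0n. Qed.

Lemma pw0 v m : v m = 0 -> pw v m = 0.
Proof. by move=> h; rewrite /pw h nrm0 powR0 // gt_eqF // p_gt0. Qed.

Lemma fin_arith (C e : R) : 1 <= C -> 0 <= e -> C * e <= C * C * e ->
  C * (e + e) + C * (e + C * (e + e)) <= 5 * (C * C) * e.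
Proof. move=> *; lra. Qed.

Section Hyp.
Variables (N : nat) (w : 'I_N -> nat -> K) (M : R) (x : nat -> K) (i0 : 'I_N).
Hypothesis M1 : 1 <= M.
Hypothesis wM : forall i m, nrm (w i m) <= M.
Hypothesis xlp : bounded x.
Hypothesis Hs : forall y, in_lp nrm p y -> forall eps, 0 < eps -> exists n,
  forall i, lp_norm nrm p (fun k => iter n (wshift (w i)) x k - y k) < eps.

Local Notation it i n v := (iter n (wshift (w i)) v).
Local Notation bt := (bet M).

Lemma M0 : 0 <= M.
Proof. exact: le_trans ler01 M1. Qed.

Lemma bt_ge1 : 1 <= bt.
Proof.
rewrite /bet; have := @powR_le_mono 1 M ler01 M1.
by rewrite powR1.
Qed.

Lemma bt_gt0 : 0 < bt.
Proof. exact: lt_le_trans ltr01 bt_ge1. Qed.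

Lemma itb i n v : bounded v -> bounded (it i n v).
Proof. exact: (@bounded_iter (w i) M (wM i)). Qed.

Lemma P_it i n v a b : P (it i n v) a b <= bt ^+ n * P v (a + n) (b + n).
Proof. exact: (@P_iter (w i) M (wM i)). Qed.

Lemma H1 y : bounded y -> forall d, 0 < d -> exists n, forall i b,
  P (fun k => it i n x k - y k) 0 b <= d.
Proof.
move=> hy d d0.
have pi0 : 0 < p^-1 by rewrite invr_gt0 p_gt0.
have e0 : 0 < d `^ p^-1 by exact: powR_gt0.
have [n hn] := Hs _ (bounded_in_lp _ hy) _ e0.
exists n => i b; apply: ltW.
have := lpnorm_lt _ _ (bounded_in_lp _ (bounded_sub _ _ (itb i n _ xlp) hy)) e0 (hn i) b.
by rewrite -powRrM mulVf ?powRr1 ?(ltW d0) // gt_eqF // p_gt0.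
Qed.


Lemma H2 y : bounded y -> forall d, 0 < d -> forall n0, exists2 n, (n0 <= n)%N &
  forall i b, P (fun k => it i n x k - y k) 0 b <= d.
Proof.
move=> hy d d0 n0.
have C0 := Cst_gt0.
have q0 : 0 < d / (2 * Cst) by rewrite divr_gt0 // mulr_gt0.
have [r hr] := small_inv _ q0.
pose sg : R := (r.+1%:R)^-1.
pose s : K := (r.+1%:R)^-1.
have sg0 : 0 < sg by rewrite invr_gt0 ltr0Sn.
have sg1 : sg <= 1 by rewrite invf_le1 ?ltr0Sn // ler1n.
have ns : nrm s = sg.
  have h : nrm s * r.+1%:R = 1.
    by rewrite -nrm_nat -nrmM mulVf ?pnatr_eq0 // nrm1.
  apply: (@mulIf _ (r.+1%:R)); first by rewrite pnatr_eq0.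
  by rewrite h /sg mulVf // pnatr_eq0.
pose tau := (sg / 4) `^ p.
have tau0 : 0 < tau by apply: powR_gt0; lra.
pose bn := bt ^+ n0.
have bn1 : 1 <= bn by exact: exprn_ege1 bt_ge1.
have bn0 : 0 < bn by exact: lt_le_trans ltr01 bn1.
have d10 : 0 < tau / (2 * bn) by rewrite divr_gt0 // mulr_gt0.
have d20 : 0 < tau / 2 by rewrite divr_gt0.
have [a1 ha1] := tail _ xlp _ d10.
have [a2 ha2] := tail _ hy _ d20.
pose J := (a1 + a2)%N.
have cJ : forall n, (n < n0)%N -> nrm (it i0 n x J - y J) < sg / 2.
  move=> n hn.
  have h1 : nrm (it i0 n x J) < sg / 4.
    apply: powR_lt_inv; [exact: nrm_ge0 | lra | ].
    change (pw (it i0 n x) J < tau).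
    apply: le_lt_trans (pw_le_P _ _ _ _ (leqnn J) (ltnSn J)) _.
    apply: le_lt_trans (P_it _ _ _ _ _) _.
    have e1 : P x (J + n) (J.+1 + n) <= tau / (2 * bn).
      apply: le_trans (P_tail_mono _ _ _) (ha1 _).
      exact: leq_trans (leq_addr a2 a1) (leq_addr n _).
    have e2 : bt ^+ n <= bn by exact: (@ler_weXn2l _ bt bt_ge1 _ _ (ltnW hn)).
    apply: le_lt_trans (ler_pM _ _ e2 e1) _.
    - exact: exprn_ge0 (ltW bt_gt0).
    - exact: P_ge0.
    have -> : bn * (tau / (2 * bn)) = tau / 2 by field; rewrite gt_eqF.
    lra.
  have h2 : nrm (y J) < sg / 4.
    apply: powR_lt_inv; [exact: nrm_ge0 | lra | ].
    change (pw y J < tau).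
    apply: le_lt_trans (pw_le_P _ _ _ _ (leqnn J) (ltnSn J)) _.
    apply: le_lt_trans (P_tail_mono _ _ (leq_addl a1 a2)) _.
    apply: le_lt_trans (ha2 _) _; lra.
  have := nrmD (it i0 n x J) (- y J); rewrite nrmN; lra.
pose e := fun k : nat => if k == J then s else 0.
have Pe : forall a b, P e a b <= sg `^ p.
  move=> a b; rewrite /P.
  have -> : sg `^ p = pw e J by rewrite /pw /e eqxx ns.
  apply: sum_delta; last by move=> m; exact: pw_ge0.
  by move=> m hm; apply: pw0; rewrite /e (negbTE hm).
have he : bounded e by exists (sg `^ p) => b; exact: Pe.
pose y' := fun k => y k + e k.
have hy' : bounded y' := bounded_add _ _ hy he.
pose t2 := (sg / 2) `^ p / 2.
have t2p : 0 < (sg / 2) `^ p by apply: powR_gt0; lra.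
have t20 : 0 < t2 by rewrite divr_gt0.
pose dl := Num.min t2 (d / (2 * Cst)).
have dl0 : 0 < dl by rewrite lt_min t20 q0.
have [n hn] := H1 _ hy' _ dl0.
exists n.
  rewrite leqNgt; apply/negP => hn0.
  have hA : (sg / 2) `^ p <= P (fun k => it i0 n x k - y' k) 0 J.+1.
    apply: le_trans _ (pw_le_P _ 0 J.+1 J (leq0n _) (ltnSn _)).
    change ((sg / 2) `^ p <= nrm (it i0 n x J - y' J) `^ p).
    apply: powR_le_mono; first lra.
    have hcj := cJ n hn0.
    have ej : e J = s by rewrite /e eqxx.
    rewrite /y' ej.
    have tri := nrmD (s - (it i0 n x J - y J)) (it i0 n x J - y J).
    rewrite subrK ns in tri.
    have eq : nrm (s - (it i0 n x J - y J)) = nrm (it i0 n x J - (y J + s)).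
      by rewrite -nrmN opprB; congr nrm; rewrite opprD addrA.
    rewrite eq in tri; lra.
  have hB := hn i0 J.+1.
  have hC : dl <= t2 by rewrite ge_min lexx.
  have : (sg / 2) `^ p <= t2 by apply: le_trans hA (le_trans hB hC).
  rewrite /t2; lra.
move=> i b.
have eqf : (fun k => it i n x k - y k) = (fun k => (it i n x k - y' k) + e k).
  by apply/funext => k; rewrite /y' opprD addrA subrK.
rewrite eqf; apply: le_trans (P_add _ _ _ _) _.
have hP1 : P (fun k => it i n x k - y' k) 0 b <= d / (2 * Cst).
  by apply: le_trans (hn i b) _; rewrite ge_min lexx orbT.
have hP2 : P e 0 b <= d / (2 * Cst).
  apply: le_trans (Pe 0 b) _; apply: le_trans _ hr.
  by apply: ge1r_powR => //; rewrite sg0 sg1.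
apply: le_trans (ler_wpM2l (ltW C0) (lerD hP1 hP2)) _.
have -> : Cst * (d / (2 * Cst) + d / (2 * Cst)) = d by field; rewrite gt_eqF.
exact: lexx.
Qed.


Definition dec (k : nat) : {ffun 'I_N -> nat} * nat :=
  odflt ([ffun => 0%N], 0%N) (unpickle k).
Definition aa k i := (dec k).1 i.
Definition LL k := (dec k).2.
Definition z k i := it i (aa k i) x.
Definition Sk k := \sum_(i < N) P (z k i) 0 (LL k).
Definition uL (L : nat) : nat -> K := fun m => if (m < L)%N then 1 else 0.
Definition EE (t : nat) : R := (t.+1)%:R * bt ^+ t.
Definition hf (k : nat) : R := (2^-1) ^+ k.

Lemma Sk_ge0 k : 0 <= Sk k.
Proof. by apply: sumr_ge0 => i _; exact: P_ge0. Qed.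

Lemma hf_gt0 k : 0 < hf k.
Proof. by apply: exprn_gt0; rewrite invr_gt0. Qed.

Lemma EE_gt0 t : 0 < EE t.
Proof. by rewrite /EE mulr_gt0 ?ltr0Sn // exprn_gt0 // bt_gt0. Qed.

Lemma EE_mono t t' : (t <= t')%N -> EE t <= EE t'.
Proof.
move=> tt'; rewrite /EE; apply: ler_pM.
- exact: ler0n.
- exact: exprn_ge0 (ltW bt_gt0).
- by rewrite ler_nat ltnS.
- exact: (@ler_weXn2l _ bt bt_ge1 _ _ tt').
Qed.

Lemma uL_bounded L : bounded (uL L).
Proof.
exists (1 *+ (L - 0)) => b.
apply: le_trans (P_split_le _ 0 b L) _.
have -> : P (uL L) L b = 0.
  rewrite /P big_nat_cond big1 // => m /andP[/andP[hm _] _].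
  by apply: pw0; rewrite /uL ltnNge hm.
rewrite addr0 /P -sumr_const_nat; apply: ler_sum => m _.
rewrite /pw /uL; case: ifP => _; first by rewrite nrm1 powR1.
by rewrite nrm0 powR0 // gt_eqF // p_gt0.
Qed.

Lemma stage k t : exists n, [/\ (t < n)%N,
  (forall b, P x n b <= hf k / (EE t * (Sk k + 1))) &
  (forall i b, P (fun m => it i n x m - uL (LL k) m) 0 b <=
     ((LL k).+1%:R)^-1 / (Sk k + 1))].
Proof.
have S1 : 0 < Sk k + 1 by have := Sk_ge0 k; lra.
have d10 : 0 < hf k / (EE t * (Sk k + 1)).
  by rewrite divr_gt0 ?hf_gt0 // mulr_gt0 ?EE_gt0.
have d20 : 0 < ((LL k).+1%:R)^-1 / (Sk k + 1).
  by rewrite divr_gt0 // invr_gt0 ltr0Sn.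
have [a1 ha1] := tail _ xlp _ d10.
have [n hn1 hn2] := H2 _ (uL_bounded (LL k)) _ d20 (maxn t.+1 a1).
exists n; split => //.
- by apply: leq_trans hn1; rewrite leq_maxl.
- move=> b; apply: le_trans (ha1 b); apply: P_tail_mono.
  by apply: leq_trans hn1; rewrite leq_maxr.
Qed.

Definition nsel k t : nat := proj1_sig (cid (stage k t)).

Lemma nsel_spec k t : [/\ (t < nsel k t)%N,
  (forall b, P x (nsel k t) b <= hf k / (EE t * (Sk k + 1))) &
  (forall i b, P (fun m => it i (nsel k t) x m - uL (LL k) m) 0 b <=
     ((LL k).+1%:R)^-1 / (Sk k + 1))].
Proof. exact: proj2_sig (cid (stage k t)). Qed.

Fixpoint tt k : nat := if k is k'.+1 then (nsel k' (tt k') + LL k')%N else 0%N.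
Definition nn k := nsel k (tt k).

Lemma ttS k : tt k.+1 = (nn k + LL k)%N.
Proof. by []. Qed.

Lemma tt_lt_nn k : (tt k < nn k)%N.
Proof. by case: (nsel_spec k (tt k)). Qed.

Lemma tt_lt k : (tt k < tt k.+1)%N.
Proof. by rewrite ttS; apply: leq_trans (tt_lt_nn k) (leq_addr _ _). Qed.

Lemma tt_mono k k' : (k <= k')%N -> (tt k <= tt k')%N.
Proof.
move=> kk'; rewrite -(subnKC kk'); elim: (k' - k)%N => [|j IH]; first by rewrite addn0.
by rewrite addnS; apply: leq_trans IH (ltnW (tt_lt _)).
Qed.

Lemma tt_ge k : (k <= tt k)%N.
Proof. by elim: k => [|k IH] //; apply: leq_ltn_trans IH (tt_lt k). Qed.

Lemma win_before k k' : (k < k')%N -> (nn k + LL k <= tt k')%N.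
Proof. by move=> kk'; rewrite -ttS; exact: tt_mono. Qed.

Arguments win_before {k k'}.
Arguments tt_mono {k k'}.

Lemma nn_mono k k' : (k <= k')%N -> (nn k <= nn k')%N.
Proof.
rewrite leq_eqVlt => /orP[/eqP -> //|kk'].
have := win_before kk'; have := tt_lt_nn k'; lia.
Qed.

Arguments nn_mono {k k'}.

Definition inw k m := (nn k <= m < nn k + LL k)%N.

Definition dd i m : K := \sum_(k < m.+1) (if inw k m then z k i (m - nn k) else 0).

Lemma inw_uniq k k' m : inw k m -> inw k' m -> k = k'.
Proof.
move=> /andP[h1 h2] /andP[h3 h4]; apply/eqP; rewrite eqn_leq; apply/andP; split.
  rewrite leqNgt; apply/negP => hk.
  have := win_before hk; have := tt_lt_nn k; lia.
rewrite leqNgt; apply/negP => hk.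
have := win_before hk; have := tt_lt_nn k'; lia.
Qed.

Lemma dd_in k m i : inw k m -> dd i m = z k i (m - nn k).
Proof.
move=> hk.
have km : (k < m.+1)%N.
  move: hk => /andP[h1 _]; have := tt_ge k; have := tt_lt_nn k; lia.
rewrite /dd (bigD1 (Ordinal km)) //= hk big1 ?addr0 // => j hj.
case: ifP => // hjw; exfalso; move: hj => /eqP; apply.
by apply: val_inj => /=; exact: inw_uniq hjw hk.
Qed.

Arguments dd_in {k m i}.

Lemma dd_out m i : (forall k, ~~ inw k m) -> dd i m = 0.
Proof. by move=> h; rewrite /dd big1 // => k _; rewrite (negbTE (h k)). Qed.

Lemma gap k m : (tt k <= m)%N -> (m < nn k)%N -> forall k', ~~ inw k' m.
Proof.
move=> h1 h2 k'; rewrite /inw negb_and -!ltnNge.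
case: (ltnP k' k) => hk.
  by apply/orP; right; have := win_before hk; lia.
by apply/orP; left; have := nn_mono hk; lia.
Qed.


Arguments gap {k m}.

Definition xi i : nat -> K := fun m => dd i m * x m.

Lemma pw_z_le k i j : (j < LL k)%N -> pw (z k i) j <= Sk k.
Proof.
move=> hj; apply: le_trans (pw_le_P _ 0 (LL k) j (leq0n _) hj) _.
rewrite /Sk (bigD1 i) //= lerDl; apply: sumr_ge0 => j' _; exact: P_ge0.
Qed.

Lemma mass_win k i : P (xi i) (nn k) (nn k + LL k) <= hf k / EE (tt k).
Proof.
have S0 := Sk_ge0 k.
have h : P (xi i) (nn k) (nn k + LL k) <= Sk k * P x (nn k) (nn k + LL k).
  rewrite /P mulr_sumr big_nat_cond [X in _ <= X]big_nat_cond.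
  apply: ler_sum => m /andP[hm _].
  have hw : inw k m by exact: hm.
  rewrite /xi pw_mul (dd_in hw); apply: ler_wpM2r; first exact: pw_ge0.
  have := pw_z_le k i (m - nn k) _; rewrite /pw; apply.
  move: hm => /andP[h1 h2]; lia.
apply: le_trans h _.
have [_ hx _] := nsel_spec k (tt k).
apply: le_trans (ler_wpM2l S0 (hx (nn k + LL k)%N)) _.
have E0 := EE_gt0 (tt k); have h0 := hf_gt0 k.
have S1 : 0 < Sk k + 1 by lra.
have -> : Sk k * (hf k / (EE (tt k) * (Sk k + 1))) =
  (hf k / EE (tt k)) * (Sk k / (Sk k + 1)).
  by field; rewrite !gt_eqF.
apply: ler_piMr; first by rewrite divr_ge0 // ltW.
by rewrite ler_pdivrMr // mul1r lerDl.
Qed.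

Lemma mass_gap k i : P (xi i) (tt k) (nn k) = 0.
Proof.
rewrite /P big_nat_cond big1 // => m /andP[/andP[h1 h2] _]; apply: pw0.
by rewrite /xi dd_out ?mul0r //; exact: gap h1 h2.
Qed.

Lemma mass_stage k i : P (xi i) (tt k) (tt k.+1) <= hf k / EE (tt k).
Proof.
rewrite ttS (P_cat _ (ltnW (tt_lt_nn k)) (leq_addr _ _)) mass_gap add0r.
exact: mass_win.
Qed.

Lemma later k i q :
  P (xi i) (tt k.+1) (tt (k.+1 + q)) <= (hf k - hf (k + q)) / EE (tt k.+1).
Proof.
elim: q => [|q IH]; first by rewrite !addn0 /P big_geq // subrr mul0r.
rewrite addnS (P_cat _ (tt_mono (leq_addr q _)) (tt_mono (leqnSn _))).
have hB : P (xi i) (tt (k.+1 + q)) (tt (k.+1 + q).+1) <=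
    hf (k + q).+1 / EE (tt k.+1).
  apply: le_trans (mass_stage _ _) _; rewrite addSn.
  apply: ler_wpM2l; first exact: ltW (hf_gt0 _).
  rewrite lef_pV2 ?posrE ?EE_gt0 //; apply: EE_mono; apply: tt_mono.
  by rewrite -addSn leq_addr.
apply: le_trans (lerD IH hB) _.
rewrite -mulrDl; apply: ler_wpM2r; first by rewrite invr_ge0 ltW // EE_gt0.
have -> : hf (k + q).+1 = 2^-1 * hf (k + q) by rewrite /hf exprS.
rewrite addnS.
have -> : hf (k + q).+1 = 2^-1 * hf (k + q) by rewrite /hf exprS.
have := hf_gt0 (k + q); lra.
Qed.

Lemma tail_xi k i b : P (xi i) (tt k.+1) b <= hf k / EE (tt k.+1).
Proof.
have hb : (b <= tt (k.+1 + b))%N by apply: leq_trans (tt_ge _); rewrite leq_addl.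
apply: le_trans (P_up_mono _ _ hb) _; apply: le_trans (later k i b) _.
apply: ler_wpM2r; first by rewrite invr_ge0 ltW // EE_gt0.
have := hf_gt0 (k + b); lra.
Qed.

Lemma xi_bounded i : bounded (xi i).
Proof.
exists (P (xi i) 0 (tt 1) + hf 0 / EE (tt 1)) => b.
apply: le_trans (P_split_le _ 0 b (tt 1)) _; apply: lerD => //.
exact: tail_xi.
Qed.


Lemma dense_xi (y : 'I_N -> nat -> K) : (forall i, bounded (y i)) ->
  forall th, 0 < th -> exists n, forall i b,
  P (fun m => it i n (xi i) m - y i m) 0 b <= th.
Proof.
move=> hy th th0.
have C1 := Cst_ge1; have C0 := Cst_gt0.
pose eta := th / (5 * (Cst * Cst)).
have eta0 : 0 < eta by rewrite divr_gt0 // !mulr_gt0.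
have hA : forall i : 'I_N, exists n : nat,
    forall b, P (fun m => it i n x m - y i m) 0 b <= eta.
  by move=> i; have [n hn] := H1 _ (hy i) _ eta0; exists n => b; exact: hn.
have [a ha] := choice hA.
have hB : forall i : 'I_N, exists L : nat, forall b, P (it i (a i) x) L b <= eta.
  by move=> i; exact: tail _ (itb i (a i) _ xlp) _ eta0.
have [Lf hLf] := choice hB.
have [r hr] := small_inv _ eta0.
pose L := (\max_(i : 'I_N) Lf i + r)%N.
pose k := pickle ([ffun i => a i], L).
have hdec : dec k = ([ffun i => a i], L) by rewrite /dec /k pickleK.
have hL : LL k = L by rewrite /LL hdec.
have ha' : forall i, aa k i = a i by move=> i; rewrite /aa hdec /= ffunE.
have hLi : ((L.+1)%:R)^-1 <= eta.
  apply: le_trans _ hr; rewrite lef_pV2 ?posrE ?ltr0Sn // ler_nat ltnS.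
  exact: leq_addl.
have [_ _ hwin] := nsel_spec k (tt k).
rewrite -/(nn k) hL in hwin.
exists (nn k) => i b.
pose v := fun m => it i (nn k) (xi i) m - y i m.
pose zz := z k i.
have hzz : zz = it i (a i) x by rewrite /zz /z ha'.
have F1 : forall j, (j < L)%N -> it i (nn k) (xi i) j = zz j * it i (nn k) x j.
  move=> j hj; rewrite /xi iter_diag.
  have hw : inw k (j + nn k) by rewrite /inw hL; apply/andP; split; lia.
  by rewrite (dd_in hw) addnK.
have hS := Sk_ge0 k.
have S1 : 0 < Sk k + 1 by lra.
have hPA : P v 0 L <= Cst * (eta + eta).
  have -> : P v 0 L = P (fun j => zz j * (it i (nn k) x j - uL L j) + (zz j - y i j)) 0 L.
    apply: eq_big_nat => j /andP[_ hj]; rewrite /pw /v F1 // /uL hj.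
    by congr (nrm _ `^ p); rewrite mulrBr mulr1 addrA subrK.
  apply: le_trans (P_add _ _ _ _) _; apply: ler_wpM2l; first exact: ltW.
  apply: lerD.
    have h1 : P (fun j => zz j * (it i (nn k) x j - uL L j)) 0 L <=
        Sk k * P (fun j => it i (nn k) x j - uL L j) 0 L.
      rewrite /P mulr_sumr big_nat_cond [X in _ <= X]big_nat_cond.
      apply: ler_sum => j /andP[/andP[_ hj] _].
      rewrite pw_mul; apply: ler_wpM2r; first exact: pw_ge0.
      have := pw_z_le k i j _; rewrite /pw; apply; by rewrite hL.
    apply: le_trans h1 _; apply: le_trans (ler_wpM2l hS (hwin i L)) _.
    apply: le_trans _ hLi.
    have -> : Sk k * ((L.+1)%:R^-1 / (Sk k + 1)) =
      (L.+1)%:R^-1 * (Sk k / (Sk k + 1)) by rewrite mulrCA.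
    apply: ler_piMr; first by rewrite invr_ge0 ler0n.
    by rewrite ler_pdivrMr // mul1r lerDl.
  by rewrite hzz; exact: ha.
have hPB : P v L b <= Cst * (eta + Cst * (eta + eta)).
  apply: le_trans (P_sub _ _ _ _) _; apply: ler_wpM2l; first exact: ltW.
  apply: lerD.
    apply: le_trans (P_it _ _ _ _ _) _.
    have ht : (L + nn k)%N = tt k.+1 by rewrite ttS hL addnC.
    rewrite ht.
    apply: le_trans (ler_wpM2l (exprn_ge0 _ (ltW bt_gt0)) (tail_xi _ _ _)) _.
    apply: le_trans _ hLi.
    rewrite ttS hL /EE.
    have hb1 : bt ^+ nn k <= bt ^+ (nn k + L).
      exact: (@ler_weXn2l _ bt bt_ge1 _ _ (leq_addr _ _)).
    have hb0 : 0 < bt ^+ (nn k + L) by apply: exprn_gt0; exact: bt_gt0.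
    have hb2 : 0 <= bt ^+ nn k by apply: exprn_ge0; exact: ltW bt_gt0.
    have hh : hf k <= 1.
      have h2 : (0:R) < 2 by rewrite ltr0n.
      have h2' : (2:R)^-1 <= 1 by rewrite invf_le1 // ler1n.
      rewrite /hf; apply: exprn_ile1 => //; rewrite invr_ge0; exact: ltW.
    have hA0 : 0 < ((nn k + L).+1)%:R :> R by rewrite ltr0Sn.
    have -> : bt ^+ nn k * (hf k / ((nn k + L).+1%:R * bt ^+ (nn k + L))) =
      (bt ^+ nn k / bt ^+ (nn k + L)) * (hf k / ((nn k + L).+1%:R)).
      move: (bt ^+ nn k) (bt ^+ (nn k + L)) (hf k) ((nn k + L).+1%:R) => X Y Z W.
      by rewrite invfM; ring.
    rewrite -[X in _ <= X]mul1r; apply: ler_pM.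
    - by rewrite divr_ge0 // ltW.
    - by rewrite divr_ge0 ?ler0n // ltW // hf_gt0.
    - by rewrite ler_pdivrMr // mul1r.
    - apply: le_trans (ler_wpM2r (_ : 0 <= ((nn k + L).+1%:R)^-1) hh) _.
        by rewrite invr_ge0 ler0n.
      rewrite mul1r lef_pV2 ?posrE ?ltr0Sn // ler_nat ltnS; exact: leq_addl.
  have -> : P (y i) L b = P (fun m => zz m - (zz m - y i m)) L b.
    by apply: eq_big_nat => m _; rewrite /pw opprB addrC subrK.
  apply: le_trans (P_sub _ _ _ _) _; apply: ler_wpM2l; first exact: ltW.
  apply: lerD.
    rewrite hzz; apply: le_trans (P_tail_mono _ _ _) (hLf i b).
    by rewrite /L; apply: leq_trans (@leq_bigmax _ Lf i) (leq_addr _ _).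
  apply: le_trans (P_tail_mono _ _ (leq0n L)) _.
  by rewrite hzz; exact: ha.
apply: le_trans (P_split_le v 0 b L) _.
apply: le_trans (lerD hPA hPB) _.
have h : Cst * eta <= Cst * Cst * eta.
  rewrite -mulrA ler_pM2l //; have := ler_wpM2r (ltW eta0) C1; rewrite mul1r.
  done.
have -> : th = 5 * (Cst * Cst) * eta.
  rewrite /eta mulrC -mulrA mulVf ?mulr1 //.
  by rewrite gt_eqF // !mulr_gt0.
exact: fin_arith C1 (ltW eta0) h.
Qed.

Lemma dsum_main : exists xs : 'I_N -> nat -> K,
  (forall i, in_lp nrm p (xs i)) /\
  forall y : 'I_N -> nat -> K, (forall i, in_lp nrm p (y i)) ->
  forall eps, 0 < eps -> exists n, forall i,
  lp_norm nrm p (fun k => it i n (xs i) k - y i k) < eps.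
Proof.
exists xi; split; first by move=> i; apply: bounded_in_lp; exact: xi_bounded.
move=> y hy eps e0.
have hyb : forall i, bounded (y i) by move=> i; exact: in_lp_bounded.
have th0 : 0 < eps `^ p / 2 by rewrite divr_gt0 // powR_gt0.
have [n hn] := dense_xi _ hyb _ th0.
exists n => i; apply: (lpnorm_le _ (eps `^ p / 2) _ e0 (hn i)).
have := powR_gt0 p e0; lra.
Qed.

End Hyp.


Lemma main_abstract : cor3p8_statement nrm p.
Proof.
move=> N N2 w hw [x [hx Hs]].
have hw' : forall i, exists M, forall m, nrm (w i m) <= M := hw.
have [Mf hMf] := choice hw'.
pose M := 1 + \sum_(i < N) `|Mf i|.
have M1 : 1 <= M.
  rewrite /M lerDl; apply: sumr_ge0 => i _; exact: normr_ge0.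
have wM : forall i m, nrm (w i m) <= M.
  move=> i m; apply: le_trans (hMf i m) _; apply: le_trans (ler_norm _) _.
  rewrite /M (bigD1 i) //=.
  have : 0 <= \sum_(j < N | j != i) `|Mf j|.
    by apply: sumr_ge0 => j _; exact: normr_ge0.
  move: (\sum_(j < N | j != i) `|Mf j|) => S.
  have := normr_ge0 (Mf i); move: `|Mf i| => a; move=> *; lra.
have N0 : (0 < N)%N by apply: leq_trans N2.
have := @dsum_main N w M x (Ordinal N0) M1 wM (in_lp_bounded _ hx) Hs.
by rewrite /dsum_hypercyclic.
Qed.

End Basic.

Theorem corollary3p8 (R : realType) (p : R) :
  1 <= p ->
  cor3p8_statement (@absRR R) p /\ cor3p8_statement (@absRC R) p.
Proof.
move=> p1; split.
  apply: main_abstract => //.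
  - by move=> a; exact: normr_ge0.
  - by move=> a b; exact: ler_normD.
  - by move=> a b; exact: normrM.
  - by move=> a; exact: normrN.
  - by move=> n; rewrite /absRR normr_nat.
apply: main_abstract => //.
- by case=> a b; rewrite /absRC /=; exact: sqrtr_ge0.
- by move=> a b; exact: le_normcD.
- by move=> a b; exact: ComplexField.Normc.normcM.
- by move=> a; exact: normcN.
- move=> n; rewrite /absRC -[n%:R]/(1 *+ n) normcMn.
  by rewrite -[1]/(1%:R) ComplexField.Normc.normc1.
Qed.
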